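(* For every integer $n\geq 1$, the empty graph $\overline{K_n}$ on $n$ vertices satisfies $\operatorname{th}_{\operatorname{H}}(\overline{K_n})=\lceil 2\sqrt{n}-1\rceil$.
   Context: All graphs are finite, simple and undirected. Hopping color change rule: a blue vertex $v$ may force a white vertex $w$ to become blue if $v$ has not previously performed a force and every neighbor of $v$ is blue. For an initial blue set $B$, a chronological list of forces of $B$ is a sequence of such forces applied one at a time until no further force is possible; its underlying unordered set is a set of forces of $B$. $B$ is a hopping forcing set if some chronological list of forces of $B$ turns all vertices blue. For a set of forces $\mathcal F$ of $B$, let $\mathcal F^{(0)}=B$ and for $t\geq1$ let $\mathcal F^{(t)}$ be the set of vertices $w\notin U_{t-1}:=\bigcup_{i=0}^{t-1}\mathcal F^{(i)}$ for which there is $(v\to w)\in\mathcal F$ with $v\in U_{t-1}$ and all neighbors of $v$ in $U_{t-1}$. $\operatorname{pt}_{\operatorname{H}}(G;\mathcal F)$ is the least $t$ with $\bigcup_{i=0}^t\mathcal F^{(i)}=V(G)$ ($\infty$ if none); $\operatorname{pt}_{\operatorname{H}}(G;B)$ is the minimum of $\operatorname{pt}_{\operatorname{H}}(G;\mathcal F)$ over sets of forces $\mathcal F$ of $B$ ($\infty$ if $B$ is not a hopping forcing set). $\operatorname{th}_{\operatorname{H}}(G)=\min_{B\subseteq V(G)}\big(|B|+\operatorname{pt}_{\operatorname{H}}(G;B)\big)$. *)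

(* Defs.v *)
From mathcomp Require Import all_boot all_order all_algebra.
From mathcomp Require Import reals.
Set Implicit Arguments. Unset Strict Implicit. Unset Printing Implicit Defensive.

Section Hopping.
Variables (T : finType) (e : rel T).

(* v (blue, not used yet, all neighbors blue) may force a white w,
   when U is the current blue set and used the list of previous forcers *)
Definition can_force (U : {set T}) (used : seq T) (v w : T) : bool :=
  [&& v \in U, v \notin used, [forall u, e v u ==> (u \in U)] & w \notin U].

Fixpoint chron_ok (U : {set T}) (used : seq T) (s : seq (T * T)) : bool :=
  match s with
  | [::] => true
  | (v, w) :: s' => can_force U used v w && chron_ok (w |: U) (v :: used) s'
  end.

Definition blue_after (B : {set T}) (s : seq (T * T)) : {set T} :=
  B :|: [set w | w \in map snd s].

Definition chron_list (B : {set T}) (s : seq (T * T)) : bool :=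
  chron_ok B [::] s &&
  [forall v, forall w, ~~ can_force (blue_after B s) (map fst s) v w].

Definition force_set (B : {set T}) (F : {set T * T}) : Prop :=
  exists s, chron_list B s /\ F = [set x in s].

Definition hopping_forcing (B : {set T}) : Prop :=
  exists s, chron_list B s /\ blue_after B s = setT.

Fixpoint blue_time (B : {set T}) (F : {set T * T}) (t : nat) : {set T} :=
  match t with
  | 0 => B
  | t'.+1 =>
    let U := blue_time B F t' in
    U :|: [set w | (w \notin U) &&
            [exists v, [&& (v, w) \in F, v \in U & [forall u, e v u ==> (u \in U)]]]]
  end.

Definition pt_H_is (B : {set T}) (t : nat) : Prop :=
  hopping_forcing B /\
  (exists F, force_set B F /\ blue_time B F t = setT) /\
  (forall F t', force_set B F -> blue_time B F t' = setT -> t <= t').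

Definition th_H_is (k : nat) : Prop :=
  (exists B t, pt_H_is B t /\ #|B| + t = k) /\
  (forall B t, pt_H_is B t -> k <= #|B| + t).

End Hopping.

Definition empty_graph (n : nat) : rel 'I_n := fun _ _ => false.
Arguments empty_graph n : clear implicits.

(* Main.v *)
Require Import Defs.
From mathcomp Require Import all_boot all_order all_algebra.
From mathcomp Require Import reals.
From mathcomp Require Import zify ring lra.
Import Order.TTheory GRing.Theory Num.Theory.

Section Gen.
Variables (T : finType) (e : rel T).
Hypothesis He : forall u v, e u v = false.

Lemma chron_ok_uniq U used s :
  chron_ok e U used s -> uniq used -> uniq (map fst s ++ used).
Proof.
elim: s U used => [|[v w] s IH] U used //= /andP[cf ok] uu.
case/and4P: cf => _ vnu _ _.
have := IH _ _ ok; rewrite /= vnu uu => /(_ isT).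
have P : perm_eq (map fst s ++ [:: v] ++ used) ([:: v] ++ map fst s ++ used).
  by rewrite perm_catCA.
by rewrite (perm_uniq P).
Qed.

Lemma uniq_fst_fun (s : seq (T * T)) v w w' :
  uniq (map fst s) -> (v, w) \in s -> (v, w') \in s -> w = w'.
Proof.
elim: s => [|[a c] s IH] //= /andP[an us].
rewrite !inE => /orP[/eqP[e1 e2]|h1] /orP[/eqP[e3 e4]|h2].
- by rewrite e2 e4.
- by move: an; rewrite -e1 (map_f fst h2).
- by move: an; rewrite -e3 (map_f fst h1).
- exact: IH.
Qed.

Lemma force_set_inj B F : force_set e B F ->
  forall v w w', (v, w) \in F -> (v, w') \in F -> w = w'.
Proof.
case=> s [/andP[ok _] ->] v w w'; rewrite !inE.
apply: uniq_fst_fun.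
by have := @chron_ok_uniq _ _ _ ok isT; rewrite cats0.
Qed.

Section Card.
Variables (B : {set T}) (F : {set T * T}).
Hypothesis Hinj : forall v w w', (v, w) \in F -> (v, w') \in F -> w = w'.

Definition fF v := odflt v [pick w | (v, w) \in F].
Lemma fFE v w : (v, w) \in F -> fF v = w.
Proof.
move=> h; rewrite /fF; case: pickP => [w' H|H] /=.
  exact: Hinj H h.
by have := H w; rewrite h.
Qed.

Definition prevU t := if t is t'.+1 then blue_time e B F t' else set0.
Definition New t := blue_time e B F t :\: prevU t.

Lemma new_sub t : New t.+1 \subset fF @: New t.
Proof.
apply/subsetP => w; rewrite /New /= in_setD => /andP[wnU].
rewrite in_setU (negbTE wnU) /= inE wnU /= => /existsP[v /and3P[vw vU _]].
apply/imsetP; exists v; last by rewrite (@fFE _ _ vw).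
rewrite in_setD vU andbT.
case: t vU wnU => [|t] vU wnU; first by rewrite inE.
apply/negP => vU'; move/negP: wnU; apply.
rewrite /= in_setU; case E: (w \in blue_time e B F t) => //=.
rewrite inE E /=; apply/existsP; exists v; rewrite vw /=.
move: vU' => /= -> /=.
by apply/forallP => u; rewrite He.
Qed.

Lemma card_bt t : #|blue_time e B F t| <= #|B| * t.+1 /\ #|New t| <= #|B|.
Proof.
elim: t => [|t [IH1 IH2]].
  by rewrite /New /= setD0 muln1.
have h2 : #|New t.+1| <= #|B|.
  apply: leq_trans (subset_leq_card (new_sub t)) _.
  exact: leq_trans (leq_imset_card _ _) IH2.
split=> //.
have sub : blue_time e B F t.+1 \subset blue_time e B F t :|: New t.+1.
  apply/subsetP => x xin; rewrite in_setU /New in_setD /= xin andbT.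
  by case: (x \in blue_time e B F t).
apply: leq_trans (subset_leq_card sub) _.
apply: leq_trans (leq_card_setU _ _) _.
by rewrite mulnS addnC leq_add.
Qed.
End Card.

Lemma lb B F t : force_set e B F -> blue_time e B F t = setT ->
  #|T| <= #|B| * t.+1.
Proof.
move=> HF Hbt; have [h _] := @card_bt B F (@force_set_inj B F HF) t.
by rewrite Hbt cardsT in h.
Qed.

End Gen.

Section Cons.
Variables (n' b : nat).
Local Notation N := n'.+1.
Local Notation G := (empty_graph N).
Hypotheses (b0 : 0 < b) (bN : b <= N).

Definition L j : {set 'I_N} := [set i : 'I_N | i < j].

Lemma cardL : #|L b| = b.
Proof.
have -> : L b = [set widen_ord bN i | i : 'I_b].
  apply/setP => i; rewrite !inE; apply/idP/imsetP => [h|[j _ ->]] //=.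
  by exists (Ordinal h) => //; apply: val_inj.
by rewrite card_imset ?card_ord // => x y /(congr1 val) /= h; apply: val_inj.
Qed.

Definition sq j k : seq ('I_N * 'I_N) :=
  [seq (inord (i - b), inord i) | i <- iota j k].

Lemma sq_ok k : forall j used, j + k = N -> b <= j ->
  all (fun v : 'I_N => v < j - b) used -> chron_ok G (L j) used (sq j k).
Proof.
elim: k => [|k IH] j used hjk hbj hu //=.
have jN : j < N by rewrite -hjk addnS ltnS leq_addr.
have jbN : j - b < N by apply: leq_ltn_trans jN; apply: leq_subr.
apply/andP; split.
  apply/and4P; split.
  - by rewrite inE inordK // ltn_subrL b0 /=; apply: leq_trans b0 hbj.
  - apply/negP => /(allP hu) /=; by rewrite inordK // ltnn.
  - by apply/forallP.
  - by rewrite inE inordK // ltnn.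
have -> : inord j |: L j = L j.+1.
  apply/setP => i; rewrite !inE [in RHS]ltnS [in RHS]leq_eqVlt; congr (_ || _).
  by apply/eqP/eqP => [->|h]; [rewrite inordK | apply: val_inj; rewrite /= inordK].
apply: IH.
- by rewrite addSnnS.
- exact: leqW.
- rewrite /= inordK //; apply/andP; split; first lia.
  apply/allP => v /(allP hu) /= h; lia.
Qed.

Definition s0 := sq b (N - b).

Lemma blue_s0 : blue_after (L b) s0 = setT.
Proof.
apply/setP => x; rewrite !inE; case: (ltnP x b) => //= hx.
apply/mapP; exists (inord (x - b), inord x); last by rewrite /= inord_val.
by apply: map_f; rewrite mem_iota hx subnKC // ltn_ord.
Qed.

Lemma chron_s0 : chron_list G (L b) s0.
Proof.
apply/andP; split.
  by apply: sq_ok => //; rewrite subnKC.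
apply/forallP => v; apply/forallP => w; rewrite blue_s0.
by apply/negP => /and4P[_ _ _]; rewrite inE.
Qed.

Definition F0 := [set x in s0].

Lemma bt_cover t (i : 'I_N) : i < b * t.+1 -> i \in blue_time G (L b) F0 t.
Proof.
elim: t i => [|t IH] i hi /=; first by rewrite inE; rewrite muln1 in hi.
rewrite in_setU; case E: (i \in blue_time G (L b) F0 t) => //=.
have hib : b <= i.
  case: (ltnP i (b * t.+1)) => h; first by rewrite IH in E.
  by apply: leq_trans h; rewrite leq_pmulr.
rewrite inE E /=; apply/existsP; exists (inord (i - b)); apply/and3P; split.
- rewrite inE; apply/mapP; exists (val i); last by rewrite inord_val.
  by rewrite mem_iota hib subnKC // ltn_ord.
- apply: IH; rewrite inordK; last by apply: leq_ltn_trans (ltn_ord i); apply: leq_subr.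
  rewrite mulnS in hi; lia.
- by apply/forallP.
Qed.

Lemma pt_cons : pt_H_is G (L b) ((N - 1) %/ b).
Proof.
split; [|split].
- by exists s0; split; [apply: chron_s0 | apply: blue_s0].
- exists F0; split; first by exists s0; split => //; apply: chron_s0.
  apply/setP => i; rewrite inE; apply: bt_cover.
  have := ltn_ceil (N - 1) b0; have := ltn_ord i; rewrite mulnC; lia.
- move=> F t' HF Hbt.
  have := @lb _ G (fun u v => erefl false) _ _ _ HF Hbt; rewrite card_ord cardL => h.
  rewrite -ltnS ltn_divLR //; lia.
Qed.

End Cons.

Local Open Scope ring_scope.

Lemma real_part (R : realType) (N m : nat) : (2 <= m)%N ->
  (4 * N <= m ^ 2)%N -> ((m.-1) ^ 2 < 4 * N)%N ->
  (m.-1)%:Z = Num.ceil (2 * Num.sqrt (N%:R : R) - 1).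
Proof.
move=> m2 h1 h2; apply/esym/ceil_def.
have s0 : 0 <= Num.sqrt (N%:R : R) by apply: sqrtr_ge0.
have s2 : Num.sqrt (N%:R : R) ^+ 2 = N%:R by rewrite sqr_sqrtr ?ler0n.
have H1 : 4 * (N%:R : R) <= (m%:R) ^+ 2.
  by rewrite -natrX -[4]/(4%:R) -natrM ler_nat.
have H2 : ((m%:R : R) - 1) ^+ 2 < 4 * N%:R.
  have -> : (m%:R : R) - 1 = (m.-1)%:R by rewrite -{1}(prednK (ltnW m2)) -natr1 addrK.
  by rewrite -natrX -[4]/(4%:R) -natrM ltr_nat.
have mE : ((m.-1)%:Z%:~R : R) = (m%:R : R) - 1.
  by rewrite -{2}(prednK (ltnW m2)) -natr1 addrK.
rewrite intrD mE /=; apply/andP; split.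
- nra.
- nra.
Qed.

Theorem proposition3p4 (R : realType) (n : nat) : (0 < n)%N ->
  exists k : nat, th_H_is (empty_graph n) k /\
    (k%:Z = Num.ceil (2 * Num.sqrt (n%:R : R) - 1)).
Proof.
case: n => [//|n'] _.
have ex : exists j, (4 * n'.+1 <= j ^ 2)%N by exists (2 * n'.+1)%N; nia.
case: (ex_minnP ex) => m Hm Hmin.
have m2 : (2 <= m)%N by case: m Hm {Hmin} => [|[|m]] //=; nia.
have m2N : (m <= 2 * n'.+1)%N by apply: Hmin; nia.
have Hlt : ((m.-1) ^ 2 < 4 * n'.+1)%N.
  rewrite ltnNge; apply/negP => /Hmin; lia.
exists m.-1; split; last exact: real_part.
split.
- have mE := divn_eq m 2.
  have r2 : (m %% 2 < 2)%N by rewrite ltn_mod.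
  set b := (m %/ 2)%N in mE *.
  set r := (m %% 2)%N in mE r2.
  clearbody b r.
  have b0 : (0 < b)%N by lia.
  have bN : (b <= n'.+1)%N by lia.
  exists (L n' b), ((n'.+1 - 1) %/ b)%N; split; first exact: (@pt_cons n' b b0 bN).
  rewrite (@cardL n' b bN).
  have c1 := ltn_ceil (n'.+1 - 1) b0.
  set t := ((n'.+1 - 1) %/ b)%N in c1 *.
  have c2 : (n'.+1 <= b * (b + r))%N.
    have : (4 * n'.+1 <= 4 * (b * (b + r)) + r)%N.
      apply: leq_trans Hm _; rewrite mE.
      have -> : ((b * 2 + r) ^ 2 = 4 * (b * (b + r)) + r * r)%N by ring.
      by rewrite leq_add2l; case: (r) r2 => [|[|]].
    lia.
  have c3 : (t < b + r)%N by rewrite /t ltn_divLR // mulnC; lia.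
  clearbody t.
  have c4 : (m <= b + t.+1)%N.
    apply: Hmin; apply: leq_trans (_ : 4 * (b * t.+1) <= _)%N.
      rewrite mulnC in c1; lia.
    exact: (nat_AGM2 b t.+1).
  lia.
- move=> B t [_ [[F [HF Hbt]] _]].
  have := @lb _ (empty_graph n'.+1) (fun u v => erefl false) _ _ _ HF Hbt.
  rewrite card_ord => h.
  have : (m <= #|B| + t.+1)%N.
    apply: Hmin; apply: leq_trans (nat_AGM2 #|B| t.+1); lia.
  lia.
Qed.
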